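(* With $x_0$, $u$, $R$ as in the kinematic equations (so $x(t)=R(t)x_0$), let $Y_0\in T_{x_0}S^m_1$ and $\Psi_0\in T^\perp_{x_0}S^m_1$. Then $Y(t)=R(t)Y_0$ is the unique tangent parallel vector field along $x(t)$ in $S^m_1$ with $Y(0)=Y_0$, and $\Psi(t)=R(t)\Psi_0$ is the unique normal parallel vector field along $x(t)$ with $\Psi(0)=\Psi_0$.
   Context: $\mathbb R^{m+1}_1$ is $\mathbb R^{m+1}$ with $\langle x,y\rangle_J=x^{\mathbf t}Jy$, $J=\mathrm{diag}(-1,I_m)$; $S^m_1=\{x:\langle x,x\rangle_J=1\}$, $T_{x}S^m_1=\{v:\langle v,x\rangle_J=0\}$, $T^\perp_xS^m_1=\mathrm{span}\{x\}$. $x_0\in S^m_1$, $u\colon[0,\tau]\to\mathbb R^{m+1}$ is absolutely continuous with $\langle u(t),x_0\rangle_J=0$, and $R$ is the absolutely continuous solution of $\dot R(t)=R(t)(u(t)x_0^{\mathbf t}-x_0u(t)^{\mathbf t})J$, $R(0)=I_{m+1}$. For a tangent field $Z$ along $x$ in $S^m_1$, $\frac{D}{dt}Z=\dot Z-\langle\dot Z,x\rangle_Jx$; for a normal field $\Psi$, $\frac{D^\perp}{dt}\Psi=\langle\dot\Psi,x\rangle_Jx$; parallel means the respective derivative vanishes a.e. *)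

(* Defs.v *)
From Stdlib Require Import Reals Lra.
Open Scope R_scope.

(* Vectors of R^{m+1} are functions nat -> R, only indices 0..m matter;
   (m+1)x(m+1) matrices are functions nat -> nat -> R. *)
Definition vec := nat -> R.
Definition mat := nat -> nat -> R.

Fixpoint fsum (n : nat) (g : nat -> R) : R :=
  match n with O => 0 | S n' => fsum n' g + g n' end.

Definition Jdiag (i : nat) : R := match i with O => -1 | S _ => 1 end.
Definition Jm : mat := fun i j => if Nat.eqb i j then Jdiag i else 0.
Definition idm : mat := fun i j => if Nat.eqb i j then 1 else 0.

Definition ip (m : nat) (x y : vec) : R :=
  sum_f_R0 (fun i => Jdiag i * x i * y i) m.

Definition mv (m : nat) (A : mat) (v : vec) : vec :=
  fun i => sum_f_R0 (fun k => A i k * v k) m.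
Definition matmul (m : nat) (A B : mat) : mat :=
  fun i j => sum_f_R0 (fun k => A i k * B k j) m.
Definition Kmat (u x0 : vec) : mat := fun i j => u i * x0 j - x0 i * u j.

(* absolute continuity on [a,b] (epsilon-delta, finite families of
   non-overlapping subintervals [s k, e k], listed in increasing order) *)
Definition abs_cont (a b : R) (f : R -> R) : Prop :=
  forall eps, 0 < eps -> exists delta, 0 < delta /\
    forall (n : nat) (s e : nat -> R),
      (forall k, (k < n)%nat -> a <= s k /\ s k <= e k /\ e k <= b) ->
      (forall k, (S k < n)%nat -> e k <= s (S k)) ->
      fsum n (fun k => e k - s k) < delta ->
      fsum n (fun k => Rabs (f (e k) - f (s k))) < eps.

Definition vabs_cont (m : nat) (a b : R) (f : R -> vec) : Prop :=
  forall i, (i <= m)%nat -> abs_cont a b (fun t => f t i).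
Definition mabs_cont (m : nat) (a b : R) (f : R -> mat) : Prop :=
  forall i j, (i <= m)%nat -> (j <= m)%nat -> abs_cont a b (fun t => f t i j).

Definition null_set (N : R -> Prop) : Prop :=
  forall eps, 0 < eps -> exists a b : nat -> R,
    (forall k, a k <= b k) /\
    (forall x, N x -> exists k, a k < x < b k) /\
    (forall n, fsum n (fun k => b k - a k) <= eps).

Definition ae_on (a b : R) (P : R -> Prop) : Prop :=
  exists N, null_set N /\ forall t, a <= t <= b -> ~ N t -> P t.

Definition has_vderiv (m : nat) (f : R -> vec) (t : R) (v : vec) : Prop :=
  forall i, (i <= m)%nat -> derivable_pt_lim (fun s => f s i) t (v i).

Definition tangent_parallel (m : nat) (tau : R) (x Z : R -> vec) : Prop :=
  vabs_cont m 0 tau Z /\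
  (forall t, 0 <= t <= tau -> ip m (Z t) (x t) = 0) /\
  ae_on 0 tau (fun t => exists v, has_vderiv m Z t v /\
     forall i, (i <= m)%nat -> v i - ip m v (x t) * x t i = 0).

Definition normal_parallel (m : nat) (tau : R) (x Psi : R -> vec) : Prop :=
  vabs_cont m 0 tau Psi /\
  (forall t, 0 <= t <= tau -> exists c, forall i, (i <= m)%nat -> Psi t i = c * x t i) /\
  ae_on 0 tau (fun t => exists v, has_vderiv m Psi t v /\
     forall i, (i <= m)%nat -> ip m v (x t) * x t i = 0).

(* Main.v *)
Require Import Defs.
From Stdlib Require Import Reals Lra Lia Classical FunctionalExtensionality.
From mathcomp Require all_boot all_algebra Rstruct.
Open Scope R_scope.




Lemma fsum_ext n g h : (forall k, (k < n)%nat -> g k = h k) -> fsum n g = fsum n h.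
Proof. induction n; intros H; simpl; [reflexivity|]. rewrite IHn by (intros; apply H; lia). rewrite H by lia. reflexivity. Qed.

Lemma fsum_le n g h : (forall k, (k < n)%nat -> g k <= h k) -> fsum n g <= fsum n h.
Proof. induction n; intros H; simpl; [lra|]. assert (fsum n g <= fsum n h) by (apply IHn; intros; apply H; lia). assert (g n <= h n) by (apply H; lia). lra. Qed.

Lemma fsum_plus n g h : fsum n (fun k => g k + h k) = fsum n g + fsum n h.
Proof. induction n; simpl; [lra|]. rewrite IHn. lra. Qed.

Lemma fsum_scal n c g : fsum n (fun k => c * g k) = c * fsum n g.
Proof. induction n; simpl; [lra|]. rewrite IHn. lra. Qed.

Lemma fsum_nonneg n g : (forall k, (k < n)%nat -> 0 <= g k) -> 0 <= fsum n g.
Proof. intros H. replace 0 with (fsum n (fun _ => 0)). apply fsum_le; auto.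
  clear H. induction n; simpl; [lra|]. rewrite IHn; lra. Qed.

Lemma fsum_single n g j : (forall k, (k < n)%nat -> 0 <= g k) -> (j < n)%nat -> g j <= fsum n g.
Proof. induction n; intros H Hj; [lia|]. simpl.
  destruct (Nat.eq_dec j n) as [->|Hne].
  - assert (0 <= fsum n g) by (apply fsum_nonneg; intros; apply H; lia). lra.
  - assert (g j <= fsum n g) by (apply IHn; [intros; apply H; lia| lia]).
    assert (0 <= g n) by (apply H; lia). lra. Qed.

Lemma fsum_zero n : fsum n (fun _ => 0) = 0.
Proof. induction n; simpl; [lra|]. rewrite IHn; lra. Qed.

Lemma ac_const a b c : abs_cont a b (fun _ => c).
Proof. intros eps He. exists 1. split; [lra|]. intros n s e _ _ _.
  rewrite (fsum_ext n _ (fun _ => 0)). rewrite fsum_zero; lra.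
  intros. unfold Rminus. rewrite Rplus_opp_r, Rabs_R0. reflexivity. Qed.

Lemma ac_plus a b f g : abs_cont a b f -> abs_cont a b g -> abs_cont a b (fun t => f t + g t).
Proof. intros Hf Hg eps He.
  destruct (Hf (eps/2)) as [d1 [Hd1 H1]]; [lra|].
  destruct (Hg (eps/2)) as [d2 [Hd2 H2]]; [lra|].
  exists (Rmin d1 d2). split; [apply Rmin_pos; auto|]. intros n s e Hs Ho Hl.
  assert (A1 := H1 n s e Hs Ho ltac:(pose proof (Rmin_l d1 d2); lra)).
  assert (A2 := H2 n s e Hs Ho ltac:(pose proof (Rmin_r d1 d2); lra)).
  eapply Rle_lt_trans with (fsum n (fun k => Rabs (f (e k) - f (s k)) + Rabs (g (e k) - g (s k)))).
  apply fsum_le. intros k _. replace (f (e k) + g (e k) - (f (s k) + g (s k))) with ((f (e k) - f (s k)) + (g (e k) - g (s k))) by ring. apply Rabs_triang.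
  rewrite fsum_plus. lra. Qed.

Lemma ac_restrict a b c f : abs_cont a b f -> c <= b -> abs_cont a c f.
Proof. intros H Hc eps He. destruct (H eps He) as [d [Hd Hd']]. exists d. split; auto.
  intros n s e Hs Ho Hl. apply Hd'; auto. intros k Hk. specialize (Hs k Hk). lra. Qed.

Inductive chain (Q : R -> R -> Prop) (a : R) : R -> Prop :=
| ch0 : chain Q a a
| chS : forall y z, chain Q a y -> Q y z -> chain Q a z.

Lemma cousin (a b : R) (Q : R -> R -> Prop) : a <= b ->
  (forall t, a <= t <= b -> exists d, 0 < d /\ forall x y, a <= x -> y <= b ->
      t - d < x <= t -> t <= y < t + d -> Q x y) -> chain Q a b.
Proof. intros Hab Hg.
  set (S := fun s => a <= s <= b /\ chain Q a s).
  assert (Hb : bound S) by (exists b; intros s [Hs _]; lra).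
  assert (Hne : exists s, S s) by (exists a; split; [lra| constructor]).
  destruct (completeness S Hb Hne) as [c [Hub Hlub]].
  assert (Hac : a <= c) by (apply Hub; split; [lra|constructor]).
  assert (Hcb : c <= b) by (apply Hlub; intros s [Hs _]; lra).
  destruct (Hg c (conj Hac Hcb)) as [d [Hd Hq]].
  assert (Hex : exists s, S s /\ c - d < s).
  { destruct (classic (exists s, S s /\ c - d < s)) as [H|H]; auto.
    exfalso. assert (c <= c - d); [|lra]. apply Hlub. intros s Hs.
    destruct (Rle_lt_dec s (c - d)); auto. exfalso; apply H; eauto. }
  destruct Hex as [s [[Hs1 Hs2] Hs3]].
  assert (Hsc : s <= c) by (apply Hub; split; auto).
  assert (Hchc : chain Q a c) by (apply chS with s; auto; apply Hq; lra).
  destruct (Req_dec c b) as [<-|Hne']; auto.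
  exfalso. set (y := Rmin b (c + d/2)).
  assert (Hy1 : c < y) by (unfold y; apply Rmin_glb_lt; lra).
  assert (Hy2 : y <= b) by apply Rmin_l.
  assert (Hy3 : y <= c + d/2) by apply Rmin_r.
  assert (S y). { split; [lra|]. apply chS with c; auto. apply Hq; lra. }
  assert (y <= c) by (apply Hub; auto). lra. Qed.

Lemma ac_bounded a b f : a <= b -> abs_cont a b f -> exists M, forall t, a <= t <= b -> Rabs (f t) <= M.
Proof. intros Hab Hf. destruct (Hf 1) as [d [Hd H]]; [lra|].
  set (Q := fun x y => x <= y /\ forall s, x <= s <= y -> Rabs (f s - f x) <= 1).
  assert (Hc : chain Q a b).
  { apply cousin; auto. intros t Ht. exists (d/2). split; [lra|].
    intros x y Hx Hy Hx1 Hy1. split; [lra|]. intros s Hs.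
    assert (Hfam := H 1%nat (fun _ => x) (fun _ => s)).
    simpl in Hfam. rewrite !Rplus_0_l in Hfam. left. apply Hfam.
    intros k Hk; lra. intros k Hk; lia. lra. }
  assert (forall z, chain Q a z -> a <= z /\ exists M, forall t, a <= t <= z -> Rabs (f t) <= M).
  { intros z Hz. induction Hz as [|y z Hy [Hay [M HM]] [Hyz Hq]].
    - split; [lra|]. exists (Rabs (f a)). intros t Ht. replace t with a by lra. lra.
    - split; [lra|]. exists (M + 1). intros t Ht. destruct (Rle_lt_dec t y).
      + specialize (HM t ltac:(lra)). lra.
      + specialize (Hq t ltac:(lra)). specialize (HM y ltac:(lra)).
        pose proof (Rabs_triang (f t - f y) (f y)). replace (f t - f y + f y) with (f t) in H0 by ring. lra. }
  destruct (H0 b Hc) as [_ [M HM]]. exists M. auto. Qed.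

Lemma ac_mult a b f g : a <= b -> abs_cont a b f -> abs_cont a b g -> abs_cont a b (fun t => f t * g t).
Proof. intros Hab Hf Hg.
  destruct (ac_bounded a b f Hab Hf) as [M1 HM1].
  destruct (ac_bounded a b g Hab Hg) as [M2 HM2].
  set (A := Rabs M1 + 1). set (B := Rabs M2 + 1).
  assert (HA : 0 < A) by (unfold A; pose proof (Rabs_pos M1); lra).
  assert (HB : 0 < B) by (unfold B; pose proof (Rabs_pos M2); lra).
  intros eps He.
  destruct (Hg (eps/(2*A))) as [d1 [Hd1 H1]]. { apply Rdiv_lt_0_compat; lra. }
  destruct (Hf (eps/(2*B))) as [d2 [Hd2 H2]]. { apply Rdiv_lt_0_compat; lra. }
  exists (Rmin d1 d2). split; [apply Rmin_pos; auto|]. intros n s e Hs Ho Hl.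
  assert (A1 := H1 n s e Hs Ho ltac:(pose proof (Rmin_l d1 d2); lra)).
  assert (A2 := H2 n s e Hs Ho ltac:(pose proof (Rmin_r d1 d2); lra)).
  eapply Rle_lt_trans with (fsum n (fun k => A * Rabs (g (e k) - g (s k)) + B * Rabs (f (e k) - f (s k)))).
  - apply fsum_le. intros k Hk. specialize (Hs k Hk).
    replace (f (e k) * g (e k) - f (s k) * g (s k)) with (f (e k) * (g (e k) - g (s k)) + g (s k) * (f (e k) - f (s k))) by ring.
    eapply Rle_trans. apply Rabs_triang. rewrite !Rabs_mult.
    assert (Rabs (f (e k)) <= A). { specialize (HM1 (e k) ltac:(lra)). unfold A. pose proof (Rle_abs M1). lra. }
    assert (Rabs (g (s k)) <= B). { specialize (HM2 (s k) ltac:(lra)). unfold B. pose proof (Rle_abs M2). lra. }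
    apply Rplus_le_compat; apply Rmult_le_compat_r; auto using Rabs_pos.
  - rewrite fsum_plus, !fsum_scal.
    assert (A * fsum n (fun k => Rabs (g (e k) - g (s k))) < eps/2).
    { replace (eps/2) with (A * (eps / (2*A))) by (field; lra). apply Rmult_lt_compat_l; auto. }
    assert (B * fsum n (fun k => Rabs (f (e k) - f (s k))) < eps/2).
    { replace (eps/2) with (B * (eps / (2*B))) by (field; lra). apply Rmult_lt_compat_l; auto. }
    lra. Qed.
Lemma fsum_mono_n n p g : (n <= p)%nat -> (forall k, 0 <= g k) -> fsum n g <= fsum p g.
Proof. intros H Hg. induction H; simpl; [lra|]. specialize (Hg m). lra. Qed.

Lemma fsum_interleave n h1 h2 :
  fsum (2*n) (fun k => if Nat.even k then h1 (Nat.div2 k) else h2 (Nat.div2 k)) = fsum n h1 + fsum n h2.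
Proof. induction n; [simpl; lra|].
  replace (2 * S n)%nat with (S (S (2*n))) by lia. cbn [fsum].
  rewrite IHn.
  assert (E1 : Nat.even (2*n) = true) by (apply Nat.even_spec; exists n; lia).
  assert (E2 : Nat.even (S (2*n)) = false) by (rewrite Nat.even_succ; rewrite <- Nat.negb_even, E1; reflexivity).
  rewrite E1, E2, Nat.div2_double, Nat.div2_succ_double. lra. Qed.

Lemma null_union N1 N2 : null_set N1 -> null_set N2 -> null_set (fun t => N1 t \/ N2 t).
Proof. intros H1 H2 eps He.
  destruct (H1 (eps/2)) as [a1 [b1 [Hab1 [Hc1 Hs1]]]]; [lra|].
  destruct (H2 (eps/2)) as [a2 [b2 [Hab2 [Hc2 Hs2]]]]; [lra|].
  exists (fun k => if Nat.even k then a1 (Nat.div2 k) else a2 (Nat.div2 k)).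
  exists (fun k => if Nat.even k then b1 (Nat.div2 k) else b2 (Nat.div2 k)).
  split; [intros k; destruct (Nat.even k); auto|]. split.
  - intros x [Hx|Hx].
    + destruct (Hc1 x Hx) as [k Hk]. exists (2*k)%nat. rewrite Nat.even_mul, Nat.div2_double. simpl. auto.
    + destruct (Hc2 x Hx) as [k Hk]. exists (S (2*k))%nat. rewrite Nat.even_succ, Nat.odd_mul, Nat.div2_succ_double. simpl. auto.
  - intros n. eapply Rle_trans. apply (fsum_mono_n n (2*n)). lia.
    intros k. destruct (Nat.even k); [specialize (Hab1 (Nat.div2 k))|specialize (Hab2 (Nat.div2 k))]; lra.
    pose proof (fsum_interleave n (fun j => b1 j - a1 j) (fun j => b2 j - a2 j)) as HI.
    erewrite fsum_ext. rewrite HI. specialize (Hs1 n). specialize (Hs2 n). lra.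
    intros k _. simpl. destruct (Nat.even k); reflexivity. Qed.

Lemma fsum_two n g : fsum (S (S n)) g = g 0%nat + g 1%nat + fsum n (fun k => g (S (S k))) .
Proof. induction n; simpl; [lra|]. simpl in IHn. rewrite IHn. lra. Qed.

Lemma null_pts p q : null_set (fun t => t = p \/ t = q).
Proof. intros eps He.
  exists (fun k => match k with O => p - eps/4 | S O => q - eps/4 | _ => 0 end).
  exists (fun k => match k with O => p + eps/4 | S O => q + eps/4 | _ => 0 end).
  split; [intros [|[|k]]; lra|]. split.
  - intros x [->| ->]; [exists 0%nat| exists 1%nat]; lra.
  - intros [|[|n]]; [simpl; lra|simpl; lra|]. rewrite fsum_two. simpl. rewrite (fsum_ext _ _ (fun _ => 0)). rewrite fsum_zero. lra.
    intros; lra. Qed.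

Lemma fsum_minus n g h : fsum n (fun k => g k - h k) = fsum n g - fsum n h.
Proof. induction n; simpl; [lra|]. rewrite IHn. lra. Qed.

Lemma telescope (phi : R -> R) a b n s e :
  (forall x y, x <= y -> phi x <= phi y) ->
  (forall k, (k < n)%nat -> a <= s k /\ s k <= e k /\ e k <= b) ->
  (forall k, (S k < n)%nat -> e k <= s (S k)) ->
  a <= b -> fsum n (fun k => phi (e k) - phi (s k)) <= phi b - phi a.
Proof. intros Hm Hs Ho Hab. destruct n as [|n]. simpl. assert (phi a <= phi b) by auto. lra.
  assert (forall p, (p <= n)%nat -> fsum (S p) (fun k => phi (e k) - phi (s k)) <= phi (e p) - phi a).
  { induction p; intros Hp.
    - simpl. specialize (Hs 0%nat ltac:(lia)). assert (phi a <= phi (s 0%nat)) by (apply Hm; lra). lra.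
    - change (fsum (S (S p)) (fun k => phi (e k) - phi (s k))) with (fsum (S p) (fun k => phi (e k) - phi (s k)) + (phi (e (S p)) - phi (s (S p)))).
      specialize (IHp ltac:(lia)). assert (phi (e p) <= phi (s (S p))) by (apply Hm; apply Ho; lia). lra. }
  specialize (H n (le_n n)). specialize (Hs n ltac:(lia)). assert (phi (e n) <= phi b) by (apply Hm; lra). lra.
Qed.

Lemma deriv0_bound f t eps : derivable_pt_lim f t 0 -> 0 < eps ->
  exists d, 0 < d /\ forall s, Rabs (s - t) < d -> Rabs (f s - f t) <= eps * Rabs (s - t).
Proof. intros H He. destruct (H eps He) as [d Hd]. exists d. split; [apply cond_pos|].
  intros s Hs. destruct (Req_dec s t) as [->|Hne].
  - unfold Rminus. rewrite !Rplus_opp_r, Rabs_R0. lra.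
  - specialize (Hd (s - t) ltac:(lra) Hs). replace (t + (s - t)) with s in Hd by ring.
    rewrite Rminus_0_r in Hd. unfold Rdiv in Hd. rewrite Rabs_mult, Rabs_inv in Hd.
    assert (0 < Rabs (s - t)) by (apply Rabs_pos_lt; lra).
    apply Rmult_lt_compat_r with (r := Rabs (s - t)) in Hd; auto.
    rewrite Rmult_assoc, Rinv_l in Hd by lra. lra. Qed.

Lemma small_zero D C : 0 < C -> (forall eps, 0 < eps -> Rabs D <= eps * C) -> D = 0.
Proof. intros HC H. destruct (Req_dec D 0) as [|Hne]; auto. exfalso.
  assert (HD : 0 < Rabs D) by (apply Rabs_pos_lt; auto).
  specialize (H (Rabs D / (2*C)) ltac:(apply Rdiv_lt_0_compat; lra)).
  replace (Rabs D / (2 * C) * C) with (Rabs D / 2) in H by (field; lra). lra. Qed.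

Lemma clamp_mono (p q x y : R) : x <= y -> Rmax p (Rmin q x) <= Rmax p (Rmin q y).
Proof. intros H. unfold Rmax, Rmin. repeat destruct Rle_dec; lra. Qed.

Lemma ac_deriv0 a b f N : a <= b -> abs_cont a b f -> null_set N ->
  (forall t, a < t < b -> ~ N t -> derivable_pt_lim f t 0) -> f b = f a.
Proof. intros Hab Hf HN Hd.
  cut (f b - f a = 0); [lra|].
  apply (small_zero (f b - f a) (b - a + 1)); [lra|]. intros eps He.
  destruct (Hf eps He) as [del [Hdel Hac]].
  set (N' := fun t => N t \/ (t = a \/ t = b)).
  assert (HN' : null_set N') by (apply null_union; auto; apply null_pts).
  destruct (HN' (del/2)) as [ak [bk [Hakb [Hcov Hsum]]]]; [lra|].
  set (Q := fun x y => x <= y /\ (Rabs (f y - f x) <= eps * (y - x) \/ exists j, ak j <= x /\ y <= bk j)).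
  assert (Hch : chain Q a b).
  { apply cousin; auto. intros t Ht. destruct (classic (N' t)) as [Hn|Hn].
    - destruct (Hcov t Hn) as [j Hj]. exists (Rmin (t - ak j) (bk j - t)).
      split; [apply Rmin_pos; lra|]. intros x y _ _ Hx Hy.
      pose proof (Rmin_l (t - ak j) (bk j - t)). pose proof (Rmin_r (t - ak j) (bk j - t)).
      split; [lra|]. right. exists j. lra.
    - assert (Hat : a < t < b). { unfold N' in Hn. destruct Ht as [H1 H2]. split.
        destruct H1; auto. exfalso; apply Hn; auto. destruct H2; auto. exfalso; apply Hn; auto. }
      assert (HnN : ~ N t) by (intro; apply Hn; left; auto).
      destruct (deriv0_bound f t eps (Hd t Hat HnN) He) as [d [Hd0 Hdb]].
      exists d. split; auto. intros x y _ _ Hx Hy. split; [lra|]. left.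
      pose proof (Hdb y ltac:(rewrite Rabs_right; lra)). pose proof (Hdb x ltac:(rewrite Rabs_left1; lra)).
      rewrite (Rabs_right (y - t)) in H by lra. rewrite (Rabs_left1 (x - t)) in H0 by lra.
      pose proof (Rabs_triang (f y - f t) (f t - f x)). replace (f y - f t + (f t - f x)) with (f y - f x) in H1 by ring.
      rewrite Rabs_minus_sym in H0. lra. }
  assert (Inv : forall z, chain Q a z -> a <= z /\ exists n s e J,
     (forall k, (k < n)%nat -> a <= s k /\ s k <= e k /\ e k <= z) /\
     (forall k, (S k < n)%nat -> e k <= s (S k)) /\
     (forall k, (k < n)%nat -> ak (J k) <= s k /\ e k <= bk (J k)) /\
     Rabs (f z - f a) <= eps * (z - a) + fsum n (fun k => Rabs (f (e k) - f (s k)))).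
  { intros z Hz. induction Hz as [|y z Hy [Hay [n [s [e [J [H1 [H2 [H3 H4]]]]]]]] [Hyz Hq]].
    - split; [lra|]. exists 0%nat, (fun _ => a), (fun _ => a), (fun _ => 0%nat).
      split; [intros; lia|]. split; [intros; lia|]. split; [intros; lia|].
      simpl. unfold Rminus. rewrite Rplus_opp_r, Rabs_R0. lra.
    - split; [lra|]. destruct Hq as [Hq|[j Hj]].
      + exists n, s, e, J. split; [intros k Hk; specialize (H1 k Hk); lra|]. split; auto. split; auto.
        pose proof (Rabs_triang (f z - f y) (f y - f a)). replace (f z - f y + (f y - f a)) with (f z - f a) in H by ring. lra.
      + exists (S n), (fun k => if Nat.eqb k n then y else s k), (fun k => if Nat.eqb k n then z else e k),
               (fun k => if Nat.eqb k n then j else J k).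
        split; [|split; [|split]].
        * intros k Hk. destruct (Nat.eqb_spec k n). lra. specialize (H1 k ltac:(lia)). lra.
        * intros k Hk. destruct (Nat.eqb_spec k n); [lia|]. destruct (Nat.eqb_spec (S k) n).
          subst n. specialize (H1 k ltac:(lia)). lra. apply H2; lia.
        * intros k Hk. destruct (Nat.eqb_spec k n). lra. apply H3; lia.
        * simpl. rewrite Nat.eqb_refl. rewrite (fsum_ext n _ (fun k => Rabs (f (e k) - f (s k)))).
          pose proof (Rabs_triang (f z - f y) (f y - f a)). replace (f z - f y + (f y - f a)) with (f z - f a) in H by ring.
          pose proof (Rabs_pos (f z - f y)). assert (eps*(y-a) <= eps*(z-a)) by (apply Rmult_le_compat_l; lra). lra.
          intros k Hk. destruct (Nat.eqb_spec k n); [lia|reflexivity]. }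
  destruct (Inv b Hch) as [_ [n [s [e [J [H1 [H2 [H3 H4]]]]]]]].
  assert (HK : exists K, forall k, (k < n)%nat -> (J k < K)%nat).
  { clear -n. induction n as [|n [K HK]]. exists 0%nat; intros; lia.
    exists (S (Nat.max K (J n))). intros k Hk. destruct (Nat.eq_dec k n). subst; lia. specialize (HK k ltac:(lia)). lia. }
  destruct HK as [K HK].
  set (phi := fun x => fsum K (fun j => Rmax (ak j) (Rmin (bk j) x) - ak j)).
  assert (Hphim : forall x y, x <= y -> phi x <= phi y).
  { intros x y Hxy. unfold phi. apply fsum_le. intros j _. pose proof (clamp_mono (ak j) (bk j) x y Hxy). lra. }
  assert (Hlen : fsum n (fun k => e k - s k) <= del/2).
  { eapply Rle_trans. apply (fsum_le n _ (fun k => phi (e k) - phi (s k))).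
    - intros k Hk. unfold phi. rewrite <- fsum_minus.
      specialize (H3 k Hk). specialize (H1 k Hk).
      eapply Rle_trans; [|apply (fsum_single K _ (J k))].
      + unfold Rmax, Rmin. repeat destruct Rle_dec; lra.
      + intros j _. pose proof (clamp_mono (ak j) (bk j) (s k) (e k) ltac:(lra)). lra.
      + auto.
    - eapply Rle_trans. apply (telescope phi a b); auto.
      unfold phi. rewrite <- fsum_minus. eapply Rle_trans. apply (fsum_le K _ (fun j => bk j - ak j)).
      intros j _. specialize (Hakb j). unfold Rmax, Rmin. repeat destruct Rle_dec; lra.
      apply Hsum. }
  assert (Hs : fsum n (fun k => Rabs (f (e k) - f (s k))) < eps).
  { apply Hac. intros k Hk; specialize (H1 k Hk); lra. auto. lra. }
  lra. Qed.


Lemma deriv_vanish f t L a b : derivable_pt_lim f t L -> (forall s, a <= s <= b -> f s = 0) -> a < t < b -> L = 0.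
Proof. intros H Hz Ht. apply (small_zero L 1); [lra|]. intros eps He.
  destruct (H eps He) as [d Hd].
  set (h := Rmin (d/2) (Rmin ((b - t)/2) ((t - a)/2))).
  assert (Hh1 : h <= d/2) by apply Rmin_l.
  assert (Hh2 : h <= (b - t)/2) by (eapply Rle_trans; [apply Rmin_r|apply Rmin_l]).
  assert (Hh3 : h <= (t - a)/2) by (eapply Rle_trans; [apply Rmin_r|apply Rmin_r]).
  assert (Hh0 : 0 < h). { unfold h. pose proof (cond_pos d). repeat apply Rmin_pos; lra. }
  specialize (Hd h ltac:(lra) ltac:(rewrite Rabs_right; lra)).
  rewrite (Hz t) in Hd by lra. rewrite (Hz (t + h)) in Hd by lra.
  replace ((0 - 0) / h - L) with (- L) in Hd by (field; lra). rewrite Rabs_Ropp in Hd. lra. Qed.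

Lemma deriv_ext f g t l : (forall s, f s = g s) -> derivable_pt_lim f t l -> derivable_pt_lim g t l.
Proof. intros H. replace g with f; auto. apply functional_extensionality; auto. Qed.

Lemma ac_deriv0_on tau f N : 0 <= tau -> abs_cont 0 tau f -> null_set N ->
  (forall t, 0 < t < tau -> ~ N t -> derivable_pt_lim f t 0) -> forall t, 0 <= t <= tau -> f t = f 0.
Proof. intros Htau Hf HN Hd t Ht. apply (ac_deriv0 0 t f N); [lra| |auto|].
  apply ac_restrict with tau; [auto|lra]. intros s Hs HNs. apply Hd; auto; lra. Qed.

Module MX.
Import all_boot all_algebra Rstruct.
Import GRing.Theory.
Set Implicit Arguments. Unset Strict Implicit.

Definition cv m (v : vec) : 'cV[R]_m.+1 := (\col_(i < m.+1) v i)%R.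
Definition mx m (A : mat) : 'M[R]_m.+1 := (\matrix_(i < m.+1, j < m.+1) A i j)%R.

Lemma sumE f m : sum_f_R0 f m = (\sum_(i < m.+1) f i)%R.
Proof. elim: m => [|m IH] /=; first by rewrite big_ord1.
by rewrite big_ord_recr /= IH. Qed.

Lemma ipE m x y : ip m x y = (((cv m x)^T *m mx m Jm *m cv m y) ord0 ord0)%R.
Proof.
rewrite /ip sumE !mxE; apply: eq_bigr => i _.
rewrite !mxE (bigD1 i) //= big1 ?addr0.
  by rewrite !mxE /Jm Nat.eqb_refl -!RmultE; ring.
move=> j /negbTE ji; rewrite !mxE /Jm.
have -> : Nat.eqb j i = false by apply/Nat.eqb_neq => /val_inj/eqP; rewrite ji.
by rewrite mulr0; reflexivity.
Qed.

Lemma cv_mv m A v : cv m (mv m A v) = (mx m A *m cv m v)%R.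
Proof. apply/matrixP => i j; rewrite !mxE /mv sumE; apply: eq_bigr => k _; by rewrite !mxE. Qed.

Lemma mx_matmul m A B : mx m (matmul m A B) = (mx m A *m mx m B)%R.
Proof. apply/matrixP => i j; rewrite !mxE /matmul sumE; apply: eq_bigr => k _; by rewrite !mxE. Qed.

Lemma cv_entry m v (i : nat) : (i <= m)%coq_nat -> cv m v (inord i) ord0 = v i.
Proof. move/leP => h. by rewrite mxE inordK. Qed.

Lemma cv_inord m (M : 'cV[R]_m.+1) : cv m (fun i => M (inord i) ord0) = M.
Proof. apply/matrixP => i j; by rewrite mxE inord_val (ord1 j). Qed.

Lemma Jtr m : ((mx m Jm)^T = mx m Jm)%R.
Proof. apply/matrixP => i j; rewrite !mxE /Jm.
case: (Nat.eqb_spec i j) => [/val_inj -> | ne]; first by rewrite Nat.eqb_refl.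
by have -> : Nat.eqb j i = false by apply/Nat.eqb_neq => e; apply ne.
Qed.

Lemma JJ m : (mx m Jm *m mx m Jm = 1%:M)%R.
Proof. apply/matrixP => i j; rewrite !mxE (bigD1 i) //= big1 ?addr0.
  rewrite !mxE /Jm Nat.eqb_refl. case: (Nat.eqb_spec i j) => [/val_inj -> |ne].
    rewrite eqxx mulr1n; case: (nat_of_ord j) => [|k] /=; rewrite -RmultE -?R1E; lra.
  rewrite mulr0. by case: eqP => // e; case: ne; rewrite e.
move=> k /negbTE ki; rewrite !mxE /Jm.
have -> : Nat.eqb i k = false by apply/Nat.eqb_neq => /val_inj/eqP; rewrite eq_sym ki.
by rewrite mul0r.
Qed.

Lemma tr11 (M : 'M[R]_1) : (M^T = M)%R.
Proof. apply/matrixP => i j; by rewrite !ord1 mxE. Qed.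

Definition mderiv p q (A : R -> 'M[R]_(p,q)) t (D : 'M[R]_(p,q)) :=
  forall i j, derivable_pt_lim (fun s => A s i j) t (D i j).
Definition mac p q a b (A : R -> 'M[R]_(p,q)) := forall i j, abs_cont a b (fun s => A s i j).

Lemma deriv_big (I : Type) (r : seq I) (F : I -> R -> R) (F' : I -> R) t :
  (forall k, derivable_pt_lim (F k) t (F' k)) ->
  derivable_pt_lim (fun s => \sum_(k <- r) F k s)%R t (\sum_(k <- r) F' k)%R.
Proof. elim: r => [|k r IH] H.
  rewrite big_nil. apply: (deriv_ext (fun _ => 0)); first by move=> s; rewrite big_nil.
  exact: derivable_pt_lim_const.
rewrite big_cons. eapply deriv_ext; last first.
  exact: (derivable_pt_lim_plus _ _ _ _ _ (H k) (IH H)).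
by move=> s /=; rewrite big_cons.
Qed.

Lemma ac_big (I : Type) (r : seq I) (F : I -> R -> R) a b :
  (forall k, abs_cont a b (F k)) -> abs_cont a b (fun s => \sum_(k <- r) F k s)%R.
Proof. elim: r => [|k r IH] H.
  have -> : (fun s => \sum_(k <- [::]) F k s)%R = (fun _ => 0) by apply: functional_extensionality => s; rewrite big_nil.
  exact: ac_const.
have -> : (fun s => \sum_(j <- k :: r) F j s)%R = (fun s => F k s + \sum_(j <- r) F j s)%R by apply: functional_extensionality => s; rewrite big_cons.
exact: (ac_plus _ _ _ _ (H k) (IH H)).
Qed.

Lemma mderiv_mul p q r (A : R -> 'M[R]_(p,q)) (B : R -> 'M[R]_(q,r)) t DA DB :
  mderiv A t DA -> mderiv B t DB ->
  mderiv (fun s => A s *m B s)%R t (DA *m B t + A t *m DB)%R.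
Proof. move=> HA HB i j.
apply: (deriv_ext (fun s => \sum_k (A s i k * B s k j))%R); first by move=> s; rewrite mxE.
rewrite !mxE -big_split. apply: deriv_big => k.
exact: (derivable_pt_lim_mult _ _ _ _ _ (HA i k) (HB k j)).
Qed.

Lemma mderiv_const p q (C : 'M[R]_(p,q)) t : mderiv (fun _ => C) t 0%R.
Proof. move=> i j; rewrite mxE; exact: derivable_pt_lim_const. Qed.

Lemma mderiv_tr p q (A : R -> 'M[R]_(p,q)) t D : mderiv A t D -> mderiv (fun s => (A s)^T)%R t D^T%R.
Proof. move=> H i j. apply: (deriv_ext (fun s => A s j i)); first by move=> s; rewrite mxE.
rewrite mxE; exact: H. Qed.

Lemma mderiv_eq p q (A : R -> 'M[R]_(p,q)) t D D' : mderiv A t D -> D = D' -> mderiv A t D'.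
Proof. by move=> H <-. Qed.

Lemma mac_mul p q r a b (A : R -> 'M[R]_(p,q)) (B : R -> 'M[R]_(q,r)) :
  a <= b -> mac a b A -> mac a b B -> mac a b (fun s => A s *m B s)%R.
Proof. move=> hab HA HB i j.
have -> : (fun s => (A s *m B s)%R i j) = (fun s => \sum_k (A s i k * B s k j))%R
  by apply: functional_extensionality => s; rewrite mxE.
apply: ac_big => k. exact: ac_mult.
Qed.

Lemma mac_const p q a b (C : 'M[R]_(p,q)) : mac a b (fun _ => C).
Proof. move=> i j; exact: ac_const. Qed.

Lemma mac_tr p q a b (A : R -> 'M[R]_(p,q)) : mac a b A -> mac a b (fun s => (A s)^T)%R.
Proof. move=> H i j.
have -> : (fun s => (A s)^T%R i j) = (fun s => A s j i) by apply: functional_extensionality => s; rewrite mxE.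
exact: H. Qed.

Lemma mconst p q tau (F : R -> 'M[R]_(p,q)) N : 0 <= tau -> mac 0 tau F -> null_set N ->
  (forall t, 0 < t < tau -> ~ N t -> mderiv F t 0%R) -> forall t, 0 <= t <= tau -> F t = F 0.
Proof. move=> ht HF HN HD t Ht. apply/matrixP => i j.
apply: (ac_deriv0_on tau (fun s => F s i j) N) => // s Hs HNs.
have := HD s Hs HNs i j. by rewrite mxE.
Qed.

End MX.

Module MM.
Import all_boot all_algebra Rstruct.
Import GRing.Theory.
Import MX.

Lemma to11 (M : 'M[R]_1) c : M ord0 ord0 = c -> M = (c%:M)%R.
Proof. move=> h; by rewrite (mx11_scalar M) h. Qed.

Lemma mv_entry m A v i : (i <= m)%coq_nat -> mv m A v i = (mx m A *m cv m v)%R (inord i) ord0.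
Proof. move=> h; by rewrite -cv_mv cv_entry. Qed.

Lemma mx_Kmat m a b : mx m (Kmat a b) = (cv m a *m (cv m b)^T - cv m b *m (cv m a)^T)%R.
Proof. apply/matrixP => i j; rewrite !mxE !big_ord1 !mxE. reflexivity. Qed.

Lemma mx_idm m : mx m idm = 1%:M%R.
Proof. apply/matrixP => i j; rewrite !mxE /idm.
case: (Nat.eqb_spec i j) => [/val_inj -> | ne]; first by rewrite eqxx.
case: eqP => // e. by case: ne; rewrite e. Qed.

Lemma mx5 p1 p2 p3 p4 p5 p6 (A : 'M[R]_(p1,p2)) (B : 'M[R]_(p2,p3)) (C : 'M[R]_(p3,p4)) (D : 'M[R]_(p4,p5)) (E : 'M[R]_(p5,p6)) :
  (A *m B *m C *m (D *m E) = A *m (B *m C *m D) *m E)%R.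
Proof. by rewrite !mulmxA. Qed.

Lemma main_aux (m : nat) (tau : R) (x0 : vec) (u : R -> vec)
  (Rm : R -> mat) (Y0 Psi0 : vec) :
  0 < tau ->
  ip m x0 x0 = 1 ->
  vabs_cont m 0 tau u ->
  (forall t, 0 <= t <= tau -> ip m (u t) x0 = 0) ->
  mabs_cont m 0 tau Rm ->
  (forall i j, (i <= m)%coq_nat -> (j <= m)%coq_nat -> Rm 0 i j = idm i j) ->
  ae_on 0 tau (fun t => forall i j, (i <= m)%coq_nat -> (j <= m)%coq_nat ->
      derivable_pt_lim (fun s => Rm s i j) t
        (matmul m (Rm t) (matmul m (Kmat (u t) x0) Jm) i j)) ->
  ip m Y0 x0 = 0 ->
  (exists c, forall i, (i <= m)%coq_nat -> Psi0 i = c * x0 i) ->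
  let x := fun t => mv m (Rm t) x0 in
  ((tangent_parallel m tau x (fun t => mv m (Rm t) Y0) /\
    (forall i, (i <= m)%coq_nat -> mv m (Rm 0) Y0 i = Y0 i)) /\
   (forall Z, tangent_parallel m tau x Z ->
      (forall i, (i <= m)%coq_nat -> Z 0 i = Y0 i) ->
      forall t i, 0 <= t <= tau -> (i <= m)%coq_nat -> Z t i = mv m (Rm t) Y0 i))
  /\
  ((normal_parallel m tau x (fun t => mv m (Rm t) Psi0) /\
    (forall i, (i <= m)%coq_nat -> mv m (Rm 0) Psi0 i = Psi0 i)) /\
   (forall Psi, normal_parallel m tau x Psi ->
      (forall i, (i <= m)%coq_nat -> Psi 0 i = Psi0 i) ->
      forall t i, 0 <= t <= tau -> (i <= m)%coq_nat -> Psi t i = mv m (Rm t) Psi0 i)).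
Proof.
move=> htau hx0 hu_ac hu hR_ac hR0 [NR [HNR hD]] hY0 [c0 hPsi0] x.
pose J := mx m Jm. pose RR t := mx m (Rm t). pose X0 := cv m x0. pose U t := cv m (u t).
pose K t := (U t *m X0^T - X0 *m (U t)^T)%R.
have hJJ : (J *m J = 1%:M)%R by exact: JJ.
have hJt : (J^T = J)%R by exact: Jtr.
have hX0 : (X0^T *m J *m X0 = 1%:M)%R by apply: to11; rewrite -ipE.
have hU : forall t, 0 <= t <= tau -> ((U t)^T *m J *m X0 = 0)%R.
  move=> t ht; apply/matrixP => i j; rewrite !ord1 -ipE hu // mxE. reflexivity.
have hY : ((cv m Y0)^T *m J *m X0 = 0)%R.
  apply/matrixP => i j; rewrite !ord1 -ipE hY0 mxE. reflexivity.
have hRac : mac 0 tau RR.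
  move=> i j. have -> : (fun s => RR s i j) = (fun s => Rm s i j) by apply: functional_extensionality => s; rewrite mxE.
  apply: hR_ac; apply/leP; rewrite -ltnS; exact: ltn_ord.
have hRR0 : RR 0 = 1%:M%R.
  rewrite -mx_idm; apply/matrixP => i j; rewrite !mxE hR0 //; apply/leP; rewrite -ltnS; exact: ltn_ord.
have hKt : forall t, ((K t)^T = - K t)%R.
  move=> t; by rewrite /K linearB /= !trmx_mul !trmxK opprB.
have hDR : forall t, 0 <= t <= tau -> ~ NR t -> mderiv RR t (RR t *m (K t *m J))%R.
  move=> t ht hn i j. have := hD t ht hn i j.
  have Hi : (i <= m)%coq_nat by apply/leP; rewrite -ltnS; exact: ltn_ord.
  have Hj : (j <= m)%coq_nat by apply/leP; rewrite -ltnS; exact: ltn_ord.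
  move=> /(_ Hi Hj) H. apply: (deriv_ext (fun s => Rm s i j)); first by move=> s; rewrite mxE.
  by rewrite /RR /K /U /X0 -mx_Kmat -!mx_matmul mxE.
have hQ : forall t, 0 <= t <= tau -> (RR t *m J *m (RR t)^T = J)%R.
  move=> t ht.
  have := @mconst _ _ tau (fun s => RR s *m J *m (RR s)^T)%R NR (Rlt_le _ _ htau).
  rewrite hRR0 mul1mx trmx1 mulmx1 => -> //.
  - apply: mac_mul; first lra. apply: mac_mul; first lra. done. exact: mac_const. exact: mac_tr.
  - move=> s hs hn. have hd := hDR s ltac:(lra) hn.
    apply: mderiv_eq. apply: mderiv_mul. apply: mderiv_mul. exact: hd. exact: mderiv_const. exact: mderiv_tr.
    rewrite mulmx0 addr0 !trmx_mul hJt hKt.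
    rewrite -!mulmxA (mulmxA J J) hJJ mul1mx (mulmxA J J) hJJ mul1mx.
    by rewrite mulNmx mulmxN addrN.
have hP : forall t, 0 <= t <= tau -> ((RR t)^T *m J *m RR t = J)%R.
  move=> t ht.
  have h1 : (RR t *m (J *m (RR t)^T *m J) = 1%:M)%R by rewrite !mulmxA hQ.
  have h2 := mulmx1C h1.
  have h3 : (J *m (J *m (RR t)^T *m J *m RR t) = J)%R by rewrite h2 mulmx1.
  by rewrite !mulmxA hJJ mul1mx in h3.
have ordle : forall (i : 'I_m.+1), (i <= m)%coq_nat by move=> i; apply/leP; rewrite -ltnS; exact: ltn_ord.
have hXX : forall t, 0 <= t <= tau -> ((RR t *m X0)^T *m J *m (RR t *m X0) = 1%:M)%R.
  move=> t ht. by rewrite trmx_mul mx5 hP.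
have hUX : forall t, 0 <= t <= tau -> ((RR t *m U t)^T *m J *m (RR t *m X0) = 0)%R.
  move=> t ht. by rewrite trmx_mul mx5 hP // hU.
have hKX : forall t, 0 <= t <= tau -> (K t *m J *m X0 = U t)%R.
  move=> t ht. rewrite /K !mulmxBl -!mulmxA (mulmxA (X0^T)) hX0 (mulmxA (U t)^T) hU //.
  by rewrite mulmx1 mulmx0 subr0.
have hxcv : forall t, cv m (x t) = (RR t *m X0)%R by move=> t; rewrite /x cv_mv.
have hvac : forall w, vabs_cont m 0 tau (fun t => mv m (Rm t) w).
  move=> w i hi.
  have -> : (fun t => mv m (Rm t) w i) = (fun t => (RR t *m cv m w)%R (inord i) ord0)
    by apply: functional_extensionality => t; rewrite mv_entry.
  apply: (@mac_mul _ _ _ 0 tau RR (fun _ => cv m w)); [lra|exact: hRac|exact: mac_const].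
have hvd : forall w t, 0 <= t <= tau -> ~ NR t ->
    has_vderiv m (fun t => mv m (Rm t) w) t (fun i => (RR t *m (K t *m J) *m cv m w)%R (inord i) ord0).
  move=> w t ht hn i hi.
  apply: (deriv_ext (fun s => (RR s *m cv m w)%R (inord i) ord0)); first by move=> s; rewrite mv_entry.
  have := @mderiv_mul _ _ _ RR (fun _ => cv m w) t _ _ (hDR t ht hn) (mderiv_const _ t).
  by rewrite mulmx0 addr0 => /(_ (inord i) ord0).
have hv0 : forall w i, (i <= m)%coq_nat -> mv m (Rm 0) w i = w i.
  move=> w i hi. rewrite mv_entry //. change (mx m (Rm 0)) with (RR 0). by rewrite hRR0 mul1mx cv_entry.
have hXY : (X0^T *m J *m cv m Y0 = 0)%R.
  by rewrite -[LHS]tr11 !trmx_mul trmxK hJt mulmxA hY.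
have TE : tangent_parallel m tau x (fun t => mv m (Rm t) Y0).
  split; [exact: hvac|split].
  - move=> t ht. rewrite ipE hxcv cv_mv trmx_mul mx5 hP // hY mxE. reflexivity.
  - exists NR; split => //. move=> t ht hn. eexists; split; first exact: hvd.
    move=> i hi.
    set c := ((U t)^T *m J *m cv m Y0)%R ord0 ord0.
    have hM : (RR t *m (K t *m J) *m cv m Y0 = - c *: (RR t *m X0))%R.
      rewrite -!mulmxA /K !mulmxBl -!mulmxA (mulmxA X0^T) hXY (mulmxA (U t)^T).
      rewrite (mx11_scalar ((U t)^T *m J *m cv m Y0)%R) -/c mul_mx_scalar mulmx0 sub0r scalemxAr scaleNr.
      done.
    rewrite ipE cv_inord hxcv hM /x mv_entry // -/(RR t) -/X0.
    rewrite linearZ /= -!scalemxAl -/J hXX // !mxE /=. rewrite mulr1 -!RmultE -RoppE; ring.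
    idtac.
have symJ : forall p q : 'cV[R]_m.+1, (p^T *m J *m q = q^T *m J *m p)%R.
  by move=> p q; rewrite -[LHS]tr11 !trmx_mul trmxK hJt mulmxA.
have TU : forall Z, tangent_parallel m tau x Z -> (forall i, (i <= m)%coq_nat -> Z 0 i = Y0 i) ->
    forall t i, 0 <= t <= tau -> (i <= m)%coq_nat -> Z t i = mv m (Rm t) Y0 i.
  move=> Z [hZac [hZt [NZ [HNZ hZd]]]] hZ0.
  pose Zc s := cv m (Z s).
  have hZcac : mac 0 tau Zc.
    move=> i j. have -> : (fun s => Zc s i j) = (fun s => Z s i) by apply: functional_extensionality => s; rewrite mxE.
    exact: hZac (ordle i).
  pose E s := (J *m (RR s)^T *m J *m Zc s)%R.
  have hEac : mac 0 tau E.
    apply: mac_mul; [lra| |exact hZcac]. apply: mac_mul; [lra| |exact: mac_const].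
    apply: mac_mul; [lra|exact: mac_const|exact: mac_tr].
  have hEc : forall t, 0 <= t <= tau -> E t = E 0.
    apply: (@mconst _ _ tau E (fun s => NR s \/ NZ s)); [lra|exact hEac| exact: null_union|].
    move=> s hs hn. have hs' : 0 <= s <= tau by lra.
    have hnR : ~ NR s by tauto. have hnZ : ~ NZ s by tauto.
    have [v [hv hvx]] := hZd s hs' hnZ.
    pose Vc := cv m v.
    have hZd' : mderiv Zc s Vc.
      move=> i j. rewrite (ord1 j) mxE. apply: (deriv_ext (fun s => Z s i)); first by move=> r; rewrite mxE.
      exact: hv (ordle i).
    pose X := (RR s *m X0)%R.
    pose a := ip m v (x s).
    have hxi : forall i : 'I_m.+1, x s i = X i ord0 by move=> i; rewrite /X -hxcv mxE.
    have hVa : Vc = (a *: X)%R.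
      apply/matrixP => i j. rewrite (ord1 j) mxE [RHS]mxE -hxi. have := hvx i (ordle i). rewrite -/a -RmultE. lra.
    pose F r := ((Zc r)^T *m J *m (RR r *m X0))%R.
    have hFd := @mderiv_mul _ _ _ (fun r => (Zc r)^T *m J)%R (fun r => RR r *m X0)%R s _ _
        (mderiv_mul (mderiv_tr hZd') (mderiv_const J s)) (mderiv_mul (hDR s hs' hnR) (mderiv_const X0 s)).
    have hF0 : forall r, 0 <= r <= tau -> F r ord0 ord0 = 0.
      move=> r hr; rewrite /F -(hxcv r) -ipE. exact: hZt.
    have hZU : ((Zc s)^T *m J *m (RR s *m U s) = - a%:M)%R.
      have h0 := deriv_vanish _ _ _ _ _ (hFd ord0 ord0) hF0 hs.
      rewrite !mulmx0 !addr0 -!mulmxA (mulmxA (K s)) hKX // hVa linearZ /= -!scalemxAl !mulmxA in h0.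
      rewrite -(mulmxA _ (RR s) X0) -/X hXX // in h0.
      have h1 : ((Zc s)^T *m J *m RR s *m U s + a *: 1%:M = 0 :> 'M_1)%R.
        apply/matrixP => i j; rewrite !ord1 addrC h0 mxE. reflexivity.
      move/eqP: h1; rewrite addr_eq0 => /eqP h1.
      by rewrite mulmxA h1 scale_scalar_mx mulr1.
    have hT1 : ((RR s *m X0)^T *m J *m Zc s = 0)%R.
      rewrite symJ. apply/matrixP => i j; rewrite !ord1. have := hF0 s hs'. rewrite /F => ->. rewrite mxE. reflexivity.
    have hKZ : (K s *m ((RR s)^T *m (J *m Zc s)) = a *: X0)%R.
      rewrite /K !mulmxBl -!mulmxA.
      have e1 : (X0^T *m ((RR s)^T *m (J *m Zc s)) = 0)%R by rewrite !mulmxA -trmx_mul hT1.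
      have e2 : ((U s)^T *m ((RR s)^T *m (J *m Zc s)) = - a%:M)%R by rewrite !mulmxA -trmx_mul symJ hZU.
      by rewrite e1 e2 mulmx0 sub0r mulmxN opprK mul_mx_scalar.
    have hEd := mderiv_mul (mderiv_mul (mderiv_mul (mderiv_const J s) (mderiv_tr (hDR s hs' hnR))) (mderiv_const J s)) hZd'.
    apply: (mderiv_eq hEd).
    rewrite mul0mx add0r mulmx0 addr0 hVa.
    have t1 : (J *m (RR s *m (K s *m J))^T *m J *m Zc s = - (a *: X0))%R.
      rewrite !trmx_mul hJt hKt -!mulmxA (mulmxA J J) hJJ mul1mx mulNmx hKZ. done.
    have t2 : (J *m (RR s)^T *m J *m (a *: X) = a *: X0)%R.
      by rewrite -scalemxAr /X mx5 hP // hJJ mul1mx.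
    by rewrite t1 t2 addNr.
  move=> t i ht hi.
  have hZ0c : Zc 0 = cv m Y0 by apply/matrixP => k j; rewrite !mxE hZ0 // (ordle k).
  have hE0 : E 0 = cv m Y0 by rewrite /E hRR0 trmx1 mulmx1 hJJ mul1mx hZ0c.
  have hZt' : Zc t = (RR t *m cv m Y0)%R.
    by rewrite -hE0 -(hEc t ht) /E !mulmxA hQ // hJJ mul1mx.
  by rewrite mv_entry // -/(RR t) -hZt' cv_entry.
have hPc : cv m Psi0 = (c0 *: X0)%R.
  apply/matrixP => i j; rewrite !mxE hPsi0; [reflexivity|exact: ordle].
have hmvP : forall t i, (i <= m)%coq_nat -> mv m (Rm t) Psi0 i = c0 * x t i.
  move=> t i hi. rewrite /x !mv_entry // hPc -scalemxAr mxE. reflexivity.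
have NE : normal_parallel m tau x (fun t => mv m (Rm t) Psi0).
  split; [exact: hvac|split].
  - move=> t ht. exists c0. move=> i hi. exact: hmvP.
  - exists NR; split => //. move=> t ht hn. eexists; split; first exact: hvd.
    move=> i hi. rewrite ipE cv_inord hxcv.
    have e : (RR t *m (K t *m J) *m cv m Psi0 = c0 *: (RR t *m U t))%R.
      by rewrite hPc -scalemxAr -mulmxA hKX.
    rewrite e linearZ /= -!scalemxAl hUX // scaler0 mxE RmultE mul0r. reflexivity.
have NU : forall Psi, normal_parallel m tau x Psi -> (forall i, (i <= m)%coq_nat -> Psi 0 i = Psi0 i) ->
    forall t i, 0 <= t <= tau -> (i <= m)%coq_nat -> Psi t i = mv m (Rm t) Psi0 i.
  move=> Psi [hPac [hPcx [NP [HNP hPd]]]] hP0.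
  pose Pc s := cv m (Psi s).
  have hPcac : mac 0 tau Pc.
    move=> i j. have -> : (fun s => Pc s i j) = (fun s => Psi s i) by apply: functional_extensionality => s; rewrite mxE.
    exact: hPac (ordle i).
  have hPcs : forall s, 0 <= s <= tau -> exists cs, Pc s = (cs *: (RR s *m X0))%R.
    move=> s hs. have [cs hcs] := hPcx s hs. exists cs.
    apply/matrixP => i j; rewrite (ord1 j) mxE [RHS]mxE -hxcv mxE hcs //; exact: ordle.
  pose F r := ((Pc r)^T *m J *m (RR r *m X0))%R.
  have hFac : mac 0 tau F.
    apply: mac_mul; [lra| |]. apply: mac_mul; [lra|exact: mac_tr|exact: mac_const].
    apply: mac_mul; [lra|exact: hRac|exact: mac_const].
  have hFc : forall t, 0 <= t <= tau -> F t = F 0.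
    apply: (@mconst _ _ tau F (fun s => NR s \/ NP s)); [lra|exact hFac| exact: null_union|].
    move=> s hs hn. have hs' : 0 <= s <= tau by lra.
    have hnR : ~ NR s by tauto. have hnP : ~ NP s by tauto.
    have [v [hv hvx]] := hPd s hs' hnP.
    pose Vc := cv m v.
    have hPd' : mderiv Pc s Vc.
      move=> i j. rewrite (ord1 j) mxE. apply: (deriv_ext (fun s => Psi s i)); first by move=> r; rewrite mxE.
      exact: hv (ordle i).
    have ha : ip m v (x s) = 0.
      case: (Req_dec (ip m v (x s)) 0) => // hne. exfalso.
      have hx0' : forall i, (i <= m)%coq_nat -> x s i = 0.
        move=> i hi. have := hvx i hi. case/Rmult_integral => //.
      have h1 : ip m (x s) (x s) = 1 by rewrite ipE hxcv hXX // mxE.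
      have h2 : ip m (x s) (x s) = 0.
        rewrite /ip. apply: sum_eq_R0 => k hk. rewrite hx0'; [|lia]. ring.
      lra.
    have hV0 : (Vc^T *m J *m (RR s *m X0) = 0)%R.
      apply/matrixP => i j; rewrite !ord1 -hxcv -ipE ha mxE. reflexivity.
    have [cs hcs] := hPcs s hs'.
    have hFd := @mderiv_mul _ _ _ (fun r => (Pc r)^T *m J)%R (fun r => RR r *m X0)%R s _ _
        (mderiv_mul (mderiv_tr hPd') (mderiv_const J s)) (mderiv_mul (hDR s hs' hnR) (mderiv_const X0 s)).
    apply: (mderiv_eq hFd).
    rewrite !mulmx0 !addr0 hV0 add0r -(mulmxA (RR s)) hKX // hcs linearZ /= -!scalemxAl symJ hUX //.
    by rewrite scaler0.
  move=> t i ht hi.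
  have [ct hct] := hPcs t ht.
  have hF0 : F 0 = (c0%:M)%R.
    rewrite /F hRR0 mul1mx.
    have -> : Pc 0 = (c0 *: X0)%R by rewrite -hPc; apply/matrixP => k j; rewrite !mxE hP0 //; exact: ordle.
    by rewrite linearZ /= -!scalemxAl hX0 scale_scalar_mx mulr1.
  have hFt : F t = (ct%:M)%R.
    by rewrite /F hct linearZ /= -!scalemxAl hXX // scale_scalar_mx mulr1.
  have hc : ct = c0.
    have := hFc t ht. rewrite hF0 hFt => /matrixP /(_ ord0 ord0). rewrite !mxE /=. by rewrite !mulr1n.
  rewrite hmvP // -(@cv_entry m (Psi t) i hi) -/(Pc t) hct mxE /x mv_entry // -hc. reflexivity.
split; (split; [split => //; exact: hv0 | done]).
Qed.
End MM.

Theorem mainTheorem3 (m : nat) (tau : R) (x0 : vec) (u : R -> vec)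
  (Rm : R -> mat) (Y0 Psi0 : vec) :
  0 < tau ->
  ip m x0 x0 = 1 ->
  vabs_cont m 0 tau u ->
  (forall t, 0 <= t <= tau -> ip m (u t) x0 = 0) ->
  mabs_cont m 0 tau Rm ->
  (forall i j, (i <= m)%nat -> (j <= m)%nat -> Rm 0 i j = idm i j) ->
  ae_on 0 tau (fun t => forall i j, (i <= m)%nat -> (j <= m)%nat ->
      derivable_pt_lim (fun s => Rm s i j) t
        (matmul m (Rm t) (matmul m (Kmat (u t) x0) Jm) i j)) ->
  ip m Y0 x0 = 0 ->
  (exists c, forall i, (i <= m)%nat -> Psi0 i = c * x0 i) ->
  let x := fun t => mv m (Rm t) x0 in
  ((tangent_parallel m tau x (fun t => mv m (Rm t) Y0) /\
    (forall i, (i <= m)%nat -> mv m (Rm 0) Y0 i = Y0 i)) /\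
   (forall Z, tangent_parallel m tau x Z ->
      (forall i, (i <= m)%nat -> Z 0 i = Y0 i) ->
      forall t i, 0 <= t <= tau -> (i <= m)%nat -> Z t i = mv m (Rm t) Y0 i))
  /\
  ((normal_parallel m tau x (fun t => mv m (Rm t) Psi0) /\
    (forall i, (i <= m)%nat -> mv m (Rm 0) Psi0 i = Psi0 i)) /\
   (forall Psi, normal_parallel m tau x Psi ->
      (forall i, (i <= m)%nat -> Psi 0 i = Psi0 i) ->
      forall t i, 0 <= t <= tau -> (i <= m)%nat -> Psi t i = mv m (Rm t) Psi0 i)).
Proof. exact (MM.main_aux m tau x0 u Rm Y0 Psi0). Qed.
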